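(* Let $G=(V,E)$ be a (directed) graph with source $s$ from which every vertex is reachable, let $w$ be a set of positive edge weights (with no two vertices equidistant from $s$), and let $m_f$ be the number of forward edges for $w$. Then for any linear decision tree solving the distance ordering problem on $(G,s)$, there exists a (possibly different) set of edge weights $\overline{w}$ for which the decision tree performs $\Omega(m_f)$ comparisons.
   Context: The distance ordering problem: given edge weights, output the vertices of $V\setminus\{s\}$ ordered by shortest-path distance from $s$. A linear decision tree is a decision tree in which each internal node compares a linear combination (with real coefficients) of the edge weights against $0$, branching on the outcome, and each leaf specifies an output. Run Dijkstra's algorithm on $(G,s,w)$ (pop the minimum-key vertex $u$; for each edge $(u,v)$, push $v$ with key distance$[u]+w(u,v)$ if $v$ is undiscovered, or decrease its key if smaller); for each $x\in V\setminus\{s\}$ the edge $(u,x)$ whose inspection pushed $x$ is unique, and these edges form a spanning tree $T$ rooted at $s$. A directed edge $(u,v)$ is a forward edge if $d(s,v)>d(s,u)$ and $(v,u)\notin T$, where $d$ is the shortest-path distance under $w$. *)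

(* Defs.v *)
From Stdlib Require Import ClassicalEpsilon.
From mathcomp Require Import all_boot all_order all_algebra.
From mathcomp Require Import reals.
Set Implicit Arguments. Unset Strict Implicit. Unset Printing Implicit Defensive.
Import Order.TTheory GRing.Theory Num.Theory.
Local Open Scope ring_scope.

Section Graph.
Variables (R : realType) (V : finType) (E : rel V) (s : V).

(* Edge weights: a real number for each ordered pair; only pairs (u,v)
   with E u v are edges, other values are irrelevant. *)
Definition weights := V * V -> R.

Definition positive_weights (w : weights) : Prop :=
  forall u v, E u v -> 0 < w (u, v).

Definition walk_weight (w : weights) (p : seq V) : R :=
  \sum_(e <- zip (s :: p) p) w e.

Definition is_dist (w : weights) (v : V) (d : R) : Prop :=
  (exists p, path E s p /\ last s p = v /\ walk_weight w p = d) /\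
  (forall p, path E s p -> last s p = v -> d <= walk_weight w p).

(* d(s, v) under w (chosen by classical description; well defined when
   v is reachable and weights are positive) *)
Definition dist (w : weights) (v : V) : R :=
  epsilon (inhabits 0) (fun d => is_dist w v d).

Definition all_reachable : Prop := forall v, connect E s v.

Definition distinct_distances (w : weights) : Prop := injective (dist w).

(* Edge (u,x) of the Dijkstra tree T: the edge whose inspection pushed x,
   i.e. x <> s and u is the in-neighbour of x popped first (smallest
   distance). *)
Definition dijkstra_tree_edge (w : weights) (u x : V) : bool :=
  [&& x != s, E u x & [forall u', E u' x ==> (dist w u <= dist w u')]].

Definition forward_edge (w : weights) (u v : V) : bool :=
  [&& E u v, dist w u < dist w v & ~~ dijkstra_tree_edge w u v].

Definition m_f (w : weights) : nat :=
  #|[set e : V * V | forward_edge w e.1 e.2]|.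

Definition correct_ordering (w : weights) (out : seq V) : Prop :=
  perm_eq out (enum [set~ s]) /\ sorted (fun x y => dist w x < dist w y) out.

End Graph.

(* Linear decision trees over edge weights: each internal node compares the
   linear combination sum_{e in E} a e * w e against 0 (three-way outcome
   <, =, >); leaves carry an output ordering. *)
Inductive ldt (R : Type) (V : Type) : Type :=
| Leaf of seq V
| Node of (V * V -> R) & ldt R V & ldt R V & ldt R V.

Section LDT.
Variables (R : realType) (V : finType) (E : rel V).

Definition lin_form (a w : V * V -> R) : R :=
  \sum_(e : V * V | E e.1 e.2) a e * w e.

Fixpoint ldt_output (t : ldt R V) (w : V * V -> R) : seq V :=
  match t with
  | Leaf o => o
  | Node a tl te tg =>
      let x := lin_form a w in
      if x < 0 then ldt_output tl w
      else if x == 0 then ldt_output te w else ldt_output tg w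
  end.

Fixpoint ldt_comparisons (t : ldt R V) (w : V * V -> R) : nat :=
  match t with
  | Leaf _ => 0
  | Node a tl te tg =>
      let x := lin_form a w in
      (if x < 0 then ldt_comparisons tl w
       else if x == 0 then ldt_comparisons te w
       else ldt_comparisons tg w).+1
  end.

Definition solves_distance_ordering (s : V) (t : ldt R V) : Prop :=
  forall w : V * V -> R, positive_weights E w -> distinct_distances E s w ->
    correct_ordering E s w (ldt_output t w).

End LDT.

(* Main.v *)
From Stdlib Require Import ClassicalEpsilon.
Require Import Defs.
From mathcomp Require Import all_boot all_order all_algebra.
From mathcomp Require Import reals.
From mathcomp Require Import ring lra zify.
Set Implicit Arguments. Unset Strict Implicit. Unset Printing Implicit Defensive.
Import Order.TTheory GRing.Theory Num.Theory.
Local Open Scope ring_scope.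

Section Walks.
Variables (R : realType) (V : finType) (E : rel V).

Definition cw (w : V * V -> R) (x : V) (p : seq V) : R :=
  \sum_(e <- zip (x :: p) p) w e.

Lemma cw_nil w x : cw w x [::] = 0.
Proof. by rewrite /cw /= big_nil. Qed.

Lemma cw_cons w x y p : cw w x (y :: p) = w (x, y) + cw w y p.
Proof. by rewrite /cw /= big_cons. Qed.

Lemma cw_cat w x p1 p2 : cw w x (p1 ++ p2) = cw w x p1 + cw w (last x p1) p2.
Proof.
elim: p1 x => [|y p1 IH] x /=; first by rewrite cw_nil add0r.
by rewrite !cw_cons IH addrA.
Qed.

Lemma cw_rcons w x p y : cw w x (rcons p y) = cw w x p + w (last x p, y).
Proof. by rewrite -cats1 cw_cat cw_cons cw_nil addr0. Qed.

Definition nonneg_on (w : V * V -> R) := forall a b, E a b -> 0 <= w (a, b).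

Lemma cw_ge0 w x p : nonneg_on w -> path E x p -> 0 <= cw w x p.
Proof.
move=> Hw; elim: p x => [|y p IH] x /=; first by rewrite cw_nil.
by case/andP=> Hxy Hp; rewrite cw_cons addr_ge0 // ?Hw // IH.
Qed.

Lemma cw_le_term w x p e : nonneg_on w -> path E x p ->
  e \in zip (x :: p) p -> w e <= cw w x p.
Proof.
move=> Hw; elim: p x => [|y p IH] x //= /andP[Hxy Hp].
rewrite in_cons cw_cons => /orP[/eqP->|He].
  by rewrite lerDl cw_ge0.
by rewrite (le_trans (IH _ Hp He)) // lerDr Hw.
Qed.

Lemma cw_le w1 w2 x p : (forall e, w1 e <= w2 e) -> cw w1 x p <= cw w2 x p.
Proof. by move=> H; rewrite /cw ler_sum. Qed.

Lemma cw_lin a b w1 w2 x p :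
  cw (fun e => a * w1 e + b * w2 e) x p = a * cw w1 x p + b * cw w2 x p.
Proof. by rewrite /cw big_split /= -!mulr_sumr. Qed.

Lemma cw_tele (g : V -> R) f x p :
  (forall e, e \in zip (x :: p) p -> f e = g e.2 - g e.1) ->
  cw f x p = g (last x p) - g x.
Proof.
elim: p x => [|y p IH] x /= H; first by rewrite cw_nil subrr.
rewrite cw_cons IH ?H ?mem_head //=; last by move=> e He; rewrite H // in_cons He orbT.
by rewrite addrC addrA subrK.
Qed.

Lemma cw_pot (g : V -> R) f x p :
  (forall a b, E a b -> g b <= g a + f (a, b)) -> path E x p ->
  g (last x p) - g x <= cw f x p.
Proof.
move=> H; elim: p x => [|y p IH] x /=; first by rewrite cw_nil subrr.
case/andP=> Hxy Hp; rewrite cw_cons.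
have := IH _ Hp; have := H _ _ Hxy.
move=> h1 h2.
have -> : g (last y p) - g x = (g (last y p) - g y) + (g y - g x) by rewrite addrA subrK.
by rewrite addrC lerD // lerBlDr addrC.
Qed.

Lemma split_mem (T : eqType) (x : T) r : x \in r -> exists p1 p2, r = p1 ++ x :: p2.
Proof. by case/splitPr=> p1 p2; exists p1, p2. Qed.

Lemma shorten_walk w x p : nonneg_on w -> path E x p ->
  exists q, [/\ path E x q, last x q = last x p, uniq (x :: q) & cw w x q <= cw w x p].
Proof.
move=> Hw; elim: p x => [|y p IH] x /=.
  by move=> _; exists [::]; rewrite /= cw_nil.
case/andP=> Hxy Hp.
have [q0 [Hq0 Hl0 Hu0 Hc0]] := IH _ Hp.
have Hc1 : cw w x (y :: q0) <= cw w x (y :: p) by rewrite !cw_cons lerD2l.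
have Hp1 : path E x (y :: q0) by rewrite /= Hxy.
case: (boolP (x \in y :: q0)) => Hx.
  have [p1 [p2 Heq]] := split_mem Hx.
  exists p2.
  move: Hp1 Hc1 Hu0; rewrite Heq cat_path => /andP[Hp1a Hp1b] Hc1 Hu0.
  move: Hp1b => /= /andP[Hlx Hp2].
  split => //.
  - have -> : last y p = last x (y :: q0) by rewrite -Hl0.
    by rewrite Heq last_cat.
  - by move: Hu0; rewrite cat_uniq => /and3P[_ _].
  - apply: le_trans Hc1; rewrite cw_cat cw_cons addrA lerDr.
    by rewrite addr_ge0 ?cw_ge0 // Hw.
exists (y :: q0); split => //=.
by rewrite Hx.
Qed.

Fixpoint allseqs (k : nat) : seq (seq V) :=
  if k is k'.+1 then [::] :: [seq x :: p | x <- enum V, p <- allseqs k']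
  else [:: [::]].

Lemma allseqsP k p : (size p <= k)%N -> p \in allseqs k.
Proof.
elim: k p => [|k IH] [|x p] //=; try by rewrite mem_head.
move=> Hs; rewrite in_cons; apply/orP; right.
by apply: (allpairs_f (fun x p => x :: p)); rewrite ?mem_enum // IH.
Qed.

Lemma list_min (T : eqType) (f : T -> R) (l : seq T) : l != [::] ->
  exists2 x, x \in l & forall y, y \in l -> f x <= f y.
Proof.
elim: l => [|a l IH] //= _.
case: (eqVneq l [::]) => [->|Hl].
  by exists a; rewrite ?mem_head // => y; rewrite inE => /eqP->.
have [b Hb Hmin] := IH Hl.
case: (lerP (f a) (f b)) => Hab.
  exists a; rewrite ?mem_head // => y; rewrite in_cons => /orP[/eqP->//|Hy].
  exact: le_trans Hab (Hmin _ Hy).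
exists b; first by rewrite in_cons Hb orbT.
move=> y; rewrite in_cons => /orP[/eqP->|Hy]; [exact: ltW | exact: Hmin].
Qed.

Lemma exists_short s w v : nonneg_on w -> connect E s v ->
  exists p, [/\ path E s p, last s p = v &
    forall q, path E s q -> last s q = v -> cw w s p <= cw w s q].
Proof.
move=> Hw /connectP [p0 Hp0 Hv].
pose L := [seq q <- allseqs #|V| | path E s q && (last s q == v)].
have Hsz : forall q, uniq (s :: q) -> (size q <= #|V|)%N.
  move=> q Hu; apply: (@leq_trans (size (s :: q))) => //.
  by rewrite -(card_uniqP Hu) max_card.
have [q0 [Hq0 Hl0 Hu0 _]] := shorten_walk Hw Hp0.
have HL : L != [::].
  apply/eqP => HL; have : q0 \in L.
    by rewrite mem_filter Hq0 Hl0 -Hv eqxx allseqsP // Hsz.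
  by rewrite HL.
have [p Hp Hmin] := list_min (cw w s) HL.
move: Hp; rewrite mem_filter => /andP[/andP[Hp /eqP Hl] _].
exists p; split => // q Hq Hlq.
have [q1 [Hq1 Hl1 Hu1 Hc1]] := shorten_walk Hw Hq.
apply: le_trans Hc1; apply: Hmin.
by rewrite mem_filter Hq1 Hl1 Hlq eqxx allseqsP // Hsz.
Qed.

Lemma is_distE s (w : V * V -> R) v d : is_dist E s w v d <->
  (exists p, [/\ path E s p, last s p = v & cw w s p = d]) /\
  (forall p, path E s p -> last s p = v -> d <= cw w s p).
Proof.
split; case=> [[p [Hp [Hl Hc]]] H2]; split => //; try by exists p.
Qed.

Lemma dist_eq s (w : V * V -> R) v d : is_dist E s w v d -> dist E s w v = d.
Proof.
move=> Hd.
have Hd' : is_dist E s w v (dist E s w v).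
  by rewrite /dist; apply: epsilon_spec; exists d.
case: Hd => [[p [Hp [Hl Hc]]] Hm]; case: Hd' => [[p' [Hp' [Hl' Hc']]] Hm'].
apply/le_anti/andP; split.
  by rewrite -Hc; apply: Hm'.
by rewrite -Hc'; apply: Hm.
Qed.

Lemma is_dist_short s (w : V * V -> R) v : nonneg_on w -> connect E s v ->
  exists p, [/\ path E s p, last s p = v, dist E s w v = cw w s p &
    forall q, path E s q -> last s q = v -> cw w s p <= cw w s q].
Proof.
move=> Hw Hc; have [p [Hp Hl Hm]] := exists_short Hw Hc.
exists p; split => //; apply: dist_eq; split; first by exists p.
exact: Hm.
Qed.

End Walks.
Section LDTlemmas.
Variables (R : realType) (V : finType) (E : rel V).

Fixpoint pathforms (t : ldt R V) (w : V * V -> R) : seq (V * V -> R) :=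
  match t with
  | Leaf _ => [::]
  | Node a tl te tg =>
      let x := lin_form E a w in
      a :: (if x < 0 then pathforms tl w
            else if x == 0 then pathforms te w else pathforms tg w)
  end.

Lemma size_pathforms t w : size (pathforms t w) = ldt_comparisons E t w.
Proof.
elim: t => [o|a tl IHl te IHe tg IHg] //=.
by case: ifP => _; [rewrite IHl | case: ifP => _; [rewrite IHe | rewrite IHg]].
Qed.

Lemma lin_formD a (w y : V * V -> R) :
  lin_form E a (fun e => w e + y e) = lin_form E a w + lin_form E a y.
Proof. by rewrite /lin_form -big_split; apply: eq_bigr => e _; rewrite mulrDr. Qed.

Lemma ldt_output_ker t (w y : V * V -> R) :
  (forall a, List.In a (pathforms t w) -> lin_form E a y = 0) ->
  ldt_output E t (fun e => w e + y e) = ldt_output E t w.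
Proof.
elim: t => [o|a tl IHl te IHe tg IHg] //= H.
rewrite lin_formD (H a) ?addr0; last by left.
move: (fun b Hb => H b (or_intror Hb)) => {}H.
case: ifP H => _ H; first exact: IHl.
case: ifP H => _ H; [exact: IHe | exact: IHg].
Qed.

Lemma In_nth (T : Type) (d : T) (l : seq T) j : (j < size l)%N -> List.In (nth d l j) l.
Proof.
elim: l j => [|a l IH] [|j] //= Hj; first by left.
by right; apply: IH.
Qed.

Lemma In_nth_ex (T : Type) (d : T) (l : seq T) a : List.In a l ->
  exists2 j, (j < size l)%N & a = nth d l j.
Proof.
elim: l => [|b l IH] //= [->|H]; first by exists 0%N.
by have [j Hj ->] := IH H; exists j.+1.
Qed.

Lemma kernel_vec (F : seq (V * V -> R)) (T : {set V * V}) :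
  (forall e, e \in T -> E e.1 e.2) -> (size F < #|T|)%N ->
  exists y : V * V -> R, [/\ forall e, e \notin T -> y e = 0,
    exists2 e, e \in T & y e != 0 &
    forall a, List.In a F -> lin_form E a y = 0].
Proof.
move=> HT Hsz.
set n := #|T|; set k := size F.
pose M : 'M[R]_(n, k) := \matrix_(i, j) (nth (fun _ => 0) F j) (enum_val i).
pose K := kermx M.
have HK : K != 0.
  apply/eqP => HK0.
  have := mxrank_ker M; rewrite -/K HK0 mxrank0 => /esym /eqP.
  rewrite subn_eq0 => Hr.
  have := leq_trans Hr (rank_leq_col M).
  by rewrite leqNgt Hsz.
have [i Hi] : exists i, row i K != 0.
  apply/existsP; apply: contraR HK; rewrite negb_exists => /forallP H.
  apply/eqP/matrixP => i j; move: (H i); rewrite negbK => /eqP/rowP/(_ j).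
  by rewrite !mxE.
set z := row i K.
have Hz : z *m M = 0 by rewrite /z -row_mul mulmx_ker row0.
have [l0 Hl0] : exists l0, z 0 l0 != 0.
  apply/existsP; apply: contraR Hi; rewrite negb_exists => /forallP H.
  apply/eqP/rowP => j; move: (H j); rewrite negbK => /eqP ->.
  by rewrite mxE.
pose y := fun e : V * V => \sum_(l < n) z 0 l * (enum_val l == e)%:R.
have Hy : forall l, y (enum_val l) = z 0 l.
  move=> l; rewrite /y (bigD1 l) //= eqxx mulr1 big1 ?addr0 // => l' Hl'.
  by rewrite (inj_eq enum_val_inj) (negbTE Hl') mulr0.
exists y; split.
- move=> e He; rewrite /y big1 // => l _.
  case: eqP => [Heq|]; last by rewrite mulr0.
  by move: He; rewrite -Heq enum_valP.
- by exists (enum_val l0); rewrite ?enum_valP // Hy.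
- move=> a /(In_nth_ex (fun _ => 0)) [j Hj ->].
  have Hzj := congr1 (fun m : 'M[R]_(1, k) => m 0 (Ordinal Hj)) Hz.
  rewrite /= !mxE in Hzj; rewrite -[X in _ = X]Hzj.
  rewrite /lin_form.
  under eq_bigr => e _ do rewrite mulr_sumr.
  rewrite exchange_big /=; apply: eq_bigr => l _.
  rewrite (bigD1 (enum_val l)) /=; last exact: HT (enum_valP l).
  rewrite eqxx mulr1 big1 ?addr0; last first.
    by move=> e /andP[_ He]; rewrite eq_sym (negbTE He) !mulr0.
  by rewrite !mxE mulrC.
Qed.

End LDTlemmas.

Section Main.
Variables (R : realType) (V : finType) (E : rel V) (s : V) (w : V * V -> R).
Hypotheses (reach : all_reachable E s) (pos : positive_weights E w)
  (inj : distinct_distances E s w).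

Local Notation d := (dist E s w).

Lemma w_nonneg : nonneg_on E w.
Proof. by move=> a b Hab; apply: ltW; apply: pos. Qed.

Lemma d_walk v : exists p, [/\ path E s p, last s p = v, d v = cw w s p &
    forall q, path E s q -> last s q = v -> cw w s p <= cw w s q].
Proof. exact: is_dist_short w_nonneg (reach v). Qed.

Lemma d_le_walk v q : path E s q -> last s q = v -> d v <= cw w s q.
Proof. by move=> Hq Hl; have [p [_ _ -> Hm]] := d_walk v; apply: Hm. Qed.

Lemma d_ge0 v : 0 <= d v.
Proof. by have [p [Hp _ -> _]] := d_walk v; apply: cw_ge0 w_nonneg Hp. Qed.

Lemma d_s : d s = 0.
Proof.
apply/le_anti; rewrite d_ge0 andbT.
by have := @d_le_walk s [::] isT erefl; rewrite cw_nil.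
Qed.

Lemma d_pred v : v != s -> exists2 p, E p v & d p < d v.
Proof.
move=> Hv; have [q [Hq Hl -> _]] := d_walk v.
move: Hq Hl; case/lastP: q => [|q v'] /=; first by move=> _ Hs; rewrite Hs eqxx in Hv.
rewrite last_rcons rcons_path => /andP[Hq He] Hv'; subst v'.
exists (last s q) => //.
rewrite cw_rcons (le_lt_trans (d_le_walk Hq erefl)) // ltrDl.
exact: pos.
Qed.

Definition rk (x : V) : nat := #|[set z | d z < d x]|.

Lemma rk_lt a b : d a < d b -> (rk a < rk b)%N.
Proof.
move=> Hab; apply: proper_card; apply/properP; split.
  by apply/subsetP => z; rewrite !inE => Hz; apply: lt_trans Hab.
by exists a; rewrite !inE ?Hab // ltxx.
Qed.

Lemma rk_ltE a b : (rk a < rk b)%N = (d a < d b).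
Proof.
case: (ltgtP (d a) (d b)) => H.
- exact: rk_lt.
- by apply/negbTE; rewrite -leqNgt ltnW // rk_lt.
- by rewrite (inj H) ltnn.
Qed.

Lemma rk_inj : injective rk.
Proof.
move=> a b Hab; case: (ltgtP (d a) (d b)) => H.
- by have := rk_lt H; rewrite Hab ltnn.
- by have := rk_lt H; rewrite Hab ltnn.
- exact: inj.
Qed.

Lemma rk_bound x : (rk x < #|V|)%N.
Proof.
rewrite -cardsT; apply: proper_card; apply/properP; split; first exact: subsetT.
by exists x; rewrite !inE ?ltxx.
Qed.

Lemma rk_s : rk s = 0%N.
Proof.
apply/eqP; rewrite cards_eq0; apply/eqP/setP => z.
by rewrite !inE d_s ltNge d_ge0.
Qed.

Lemma rk_onto r : (r < #|V|)%N -> exists x, rk x = r.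
Proof.
move=> Hr.
pose f x : 'I_#|V| := Ordinal (rk_bound x).
have finj : injective f by move=> a b /(congr1 val) /= /rk_inj.
have := inj_card_onto finj (eq_leq (card_ord _)) (Ordinal Hr).
by case/codomP => x /(congr1 val) /= Hx; exists x.
Qed.

Definition dbar (x : V) : R := (4 ^ rk x)%:R - 1.
Definition Hbig : R := 3 * (4 ^ #|V|)%:R.
Definition wbar (e : V * V) : R :=
  if (rk e.1 < rk e.2)%N then dbar e.2 - dbar e.1 else Hbig.

Lemma dbar_lt a b : (rk a < rk b)%N -> dbar a < dbar b.
Proof. by move=> H; rewrite /dbar ltrD2r ltr_nat ltn_exp2l. Qed.

Lemma dbar_ge0 x : 0 <= dbar x.
Proof. by rewrite /dbar subr_ge0 ler1n expn_gt0. Qed.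

Lemma dbar_ub x : dbar x <= (4 ^ #|V|)%:R.
Proof.
have h : (4 ^ rk x)%:R <= (4 ^ #|V|)%:R :> R.
  by rewrite ler_nat leq_exp2l // ltnW // rk_bound.
rewrite /dbar; lra.
Qed.

Lemma dbar_s : dbar s = 0.
Proof. by rewrite /dbar rk_s expn0 subrr. Qed.

Lemma dbar_inj : injective dbar.
Proof.
move=> a b H; apply: rk_inj; case: (ltngtP (rk a) (rk b)) => // Hr.
- by have := dbar_lt Hr; rewrite H ltxx.
- by have := dbar_lt Hr; rewrite H ltxx.
Qed.

Lemma Hbig_gt x : 2 * dbar x < Hbig.
Proof.
rewrite /Hbig; have := dbar_ub x; have : (0 < (4 ^ #|V|)%:R :> R).
  by rewrite ltr0n expn_gt0.
move=> h1 h2; lra.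
Qed.

Lemma wbar_gt0 e : 0 < wbar e.
Proof.
rewrite /wbar; case: ifP => H; first by rewrite subr_gt0 dbar_lt.
by have := Hbig_gt e.1; have := dbar_ge0 e.1; move=> h1 h2; lra.
Qed.

Lemma zip_rcons2 (x0 : V) q y :
  zip (x0 :: rcons q y) (rcons q y) = rcons (zip (x0 :: q) q) (last x0 q, y).
Proof. by elim: q x0 => [|a q IH] x0 //=; rewrite IH. Qed.

Lemma inc_walk x : exists p, [/\ path E s p, last s p = x &
  forall e, e \in zip (s :: p) p -> (rk e.1 < rk e.2)%N].
Proof.
have [r Hr] : exists r, (rk x <= r)%N by exists (rk x).
elim: r x Hr => [|r IH] x Hx.
  have Hxs : x = s by apply: rk_inj; rewrite rk_s; apply/eqP; rewrite -leqn0.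
  by exists [::]; split.
case: (eqVneq x s) => [->|Hxs]; first by exists [::]; split.
have [p Hp Hpd] := d_pred Hxs.
have Hrp : (rk p < rk x)%N by rewrite rk_ltE.
have [q [Hq Hl Hi]] := IH p (leq_trans (leq_trans Hrp Hx) (leqnn _)).
exists (rcons q x); split.
- by rewrite rcons_path Hq Hl.
- by rewrite last_rcons.
- move=> e; rewrite zip_rcons2 mem_rcons in_cons => /orP[/eqP->|He] /=.
    by rewrite Hl.
  exact: Hi.
Qed.


Lemma cw_wbar_inc x p : (forall e, e \in zip (x :: p) p -> (rk e.1 < rk e.2)%N) ->
  cw wbar x p = dbar (last x p) - dbar x.
Proof. by move=> H; apply: cw_tele => e He; rewrite /wbar H. Qed.

Lemma wbar_pot a b : dbar b <= dbar a + wbar (a, b).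
Proof.
rewrite /wbar /=; case: ifP => _; first by rewrite addrC subrK.
by have := Hbig_gt b; have := dbar_ge0 a; have := dbar_ge0 b; move=> *; lra.
Qed.

Lemma wbar_le_walk x q : path E s q -> last s q = x -> dbar x <= cw wbar s q.
Proof.
move=> Hq Hl; have := cw_pot (g := dbar) (f := wbar) (fun a b _ => wbar_pot a b) Hq.
by rewrite Hl dbar_s subr0.
Qed.

Lemma dist_wbar x : dist E s wbar x = dbar x.
Proof.
apply: dist_eq; split; last by move=> p Hp Hl; apply: wbar_le_walk.
have [p [Hp Hl Hi]] := inc_walk x.
by exists p; split => //; split => //; rewrite /walk_weight -/(cw _ _ _) cw_wbar_inc // Hl dbar_s subr0.
Qed.

Definition Tpar (b : bool) : {set V * V} :=
  [set e : V * V | [&& E e.1 e.2, (rk e.1 + 2 <= rk e.2)%N & odd (rk e.2) == b]].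

Definition M2 : {set V * V} := [set e : V * V | E e.1 e.2 && (rk e.1 + 2 <= rk e.2)%N].

Lemma M2_split : #|M2| = (#|Tpar true| + #|Tpar false|)%N.
Proof.
rewrite -(cardsID [set e : V * V | odd (rk e.2)] M2); congr (_ + _)%N; apply: eq_card => e;
  rewrite !inE; case: (odd _); rewrite ?andbT ?andbF //.
Qed.

Lemma mf_bound : (m_f E s w <= #|Tpar true| + #|Tpar false|)%N.
Proof.
rewrite -M2_split /m_f.
set Fw := [set e : V * V | forward_edge E s w e.1 e.2].
pose u0 (e : V * V) := [arg min_(a < e.1 | E a e.2) rk a].
pose f (e : V * V) := if (rk e.1 + 2 <= rk e.2)%N then e else (u0 e, e.2).
have Htree : forall e, e \in Fw -> ~~ (rk e.1 + 2 <= rk e.2)%N ->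
    [/\ dijkstra_tree_edge E s w (u0 e) e.2, (rk (u0 e) + 2 <= rk e.2)%N &
        rk e.1 = (rk e.2).-1].
  move=> [u v]; rewrite inE /forward_edge /= => /and3P[Huv Hd Hnt] Hr.
  rewrite /u0 /=; case: (arg_minnP rk (P := fun a => E a v) Huv) => u1 Hu1 Hmin.
  have Hrl : (rk u < rk v)%N by rewrite rk_ltE.
  have Hvs : v != s.
    by apply/eqP => Hvs; move: Hd; rewrite Hvs d_s ltNge d_ge0.
  have Ht : dijkstra_tree_edge E s w u1 v.
    rewrite /dijkstra_tree_edge Hvs Hu1 /=; apply/forallP => u' ; apply/implyP => Hu'.
    have := Hmin _ Hu'; rewrite leq_eqVlt => /orP[/eqP /rk_inj ->//|].
    by rewrite rk_ltE => /ltW.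
  have Hne : u1 != u by apply: contraNneq Hnt => <-.
  have Hlt : (rk u1 < rk u)%N.
    by rewrite ltn_neqAle Hmin // andbT; apply: contra Hne => /eqP /rk_inj ->.
  split => //; first by move: Hr Hrl Hlt; clear; lia.
  by move: Hr Hrl; clear; lia.
have Himg : forall e, e \in Fw -> f e \in M2.
  move=> e He; rewrite /f; case: ifP => Hr.
    by move: He; rewrite !inE /forward_edge => /and3P[-> _ _].
  have [Ht Hr2 _] := Htree e He (negbT Hr).
  by rewrite inE /= Hr2 andbT; case/and3P: Ht.
have Hinj : {in Fw &, injective f}.
  move=> e1 e2 H1 H2; rewrite /f.
  have Hnf : forall e, e \in Fw -> ~~ (rk e.1 + 2 <= rk e.2)%N ->
      (u0 e, e.2) \notin Fw.
    move=> e He Hr; have [Ht _ _] := Htree e He Hr.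
    by rewrite inE /forward_edge /= Ht !andbF.
  case: ifP => Hr1; case: ifP => Hr2.
  - by [].
  - by move=> Heq; have := Hnf _ H2 (negbT Hr2); rewrite -Heq H1.
  - by move=> Heq; have := Hnf _ H1 (negbT Hr1); rewrite Heq H2.
  - move=> [_ Hv]; have [_ _ Hu1] := Htree _ H1 (negbT Hr1).
    have [_ _ Hu2] := Htree _ H2 (negbT Hr2).
    move: e1 e2 H1 H2 Hr1 Hr2 Hv Hu1 Hu2 => [a1 b1] [a2 b2] /= _ _ _ _ -> Hu1 Hu2.
    by congr (_, _); apply: rk_inj; rewrite Hu1 Hu2.
rewrite -(card_in_imset Hinj); apply: subset_leq_card.
by apply/subsetP => e' /imsetP [e He ->]; apply: Himg.
Qed.

Lemma cw_ext (f g : V * V -> R) (x : V) p : (forall e, f e = g e) -> cw f x p = cw g x p.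
Proof. by move=> H; apply: eq_bigr => e _; apply: H. Qed.

Lemma cw_scale (a : R) (f : V * V -> R) (x : V) p : cw (fun e => a * f e) x p = a * cw f x p.
Proof. by rewrite /cw mulr_sumr. Qed.

Lemma core b (y : V * V -> R) :
  (forall e, e \notin Tpar b -> y e = 0) -> (exists2 e, e \in Tpar b & y e != 0) ->
  exists c : R, exists x v,
    [/\ positive_weights E (fun e => wbar e + c * y e),
        distinct_distances E s (fun e => wbar e + c * y e),
        (x != s) && (v != s), dbar x < dbar v &
        dist E s (fun e => wbar e + c * y e) v < dist E s (fun e => wbar e + c * y e) x].
Proof.
move=> Hy0 [e0 He0 Hye0].
set T := Tpar b.
have HTinc : forall e, e \in T -> E e.1 e.2 /\ (rk e.1 + 2 <= rk e.2)%N.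
  by move=> e; rewrite inE => /and3P[].
pose ratio e := `|y e| / wbar e.
have Hlne : enum T != [::].
  by apply/eqP => H; have := mem_enum T e0; rewrite H He0.
have [e1 He1 Hmax] := list_min (fun e => - ratio e) Hlne.
rewrite mem_enum in He1.
have Hmax' : forall e, e \in T -> ratio e <= ratio e1.
  by move=> e He; have := Hmax e; rewrite mem_enum lerN2 => ->.
set rho := ratio e1.
have Hr0 : 0 < ratio e0 by rewrite /ratio divr_gt0 ?normr_gt0 ?wbar_gt0.
have Hrho : 0 < rho by apply: lt_le_trans Hr0 (Hmax' _ He0).
have Hy1 : `|y e1| = rho * wbar e1 by rewrite /rho /ratio divfK // gt_eqF ?wbar_gt0.
pose sg : R := if y e1 < 0 then 1 else -1.
pose kappa := sg / rho.
have Hsg : `|sg| = 1 by rewrite /sg; case: ifP; rewrite ?normrN normr1.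
have Hky1 : sg * y e1 = - (rho * wbar e1).
  rewrite -Hy1 /sg; case: ltP => H; first by rewrite mul1r ltr0_norm // opprK.
  by rewrite ger0_norm // mulN1r.
have Hky : forall e, `|sg * y e| <= rho * wbar e.
  move=> e; rewrite normrM Hsg mul1r.
  case: (boolP (e \in T)) => He; last by rewrite Hy0 // normr0 mulr_ge0 // ltW ?wbar_gt0.
  by have := Hmax' e He; rewrite /ratio ler_pdivrMr ?wbar_gt0 // mulrC.
pose w0 e := wbar e + kappa * y e.
have Hw0k : forall e, kappa * y e = (sg * y e) / rho by move=> e; rewrite /kappa mulrAC.
have Hw0ge : forall e, 0 <= w0 e.
  move=> e; rewrite /w0 Hw0k; have := Hky e; rewrite ler_norml => /andP[h1 _].
  have : - wbar e <= sg * y e / rho by rewrite ler_pdivlMr // mulNr mulrC.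
  by move=> h; lra.
have Hw0le : forall e, w0 e <= 2 * wbar e.
  move=> e; rewrite /w0 Hw0k; have := Hky e; rewrite ler_norml => /andP[_ h1].
  have : sg * y e / rho <= wbar e by rewrite ler_pdivrMr // [wbar e * _]mulrC.
  by move=> h; lra.
have Hw0e1 : w0 e1 = 0.
  by rewrite /w0 Hw0k Hky1 mulNr mulrC mulKf ?gt_eqF // subrr.
have Hw0out : forall e, e \notin T -> w0 e = wbar e.
  by move=> e He; rewrite /w0 Hy0 // mulr0 addr0.
have Hw0nn : nonneg_on E w0 by move=> a c _; apply: Hw0ge.
pose psi := dist E s w0.
have Hpsi : forall x, exists p, [/\ path E s p, last s p = x, psi x = cw w0 s p &
    forall q, path E s q -> last s q = x -> cw w0 s p <= cw w0 s q].
  by move=> x; apply: is_dist_short Hw0nn (reach x).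
have Hpsi_le : forall x q, path E s q -> last s q = x -> psi x <= cw w0 s q.
  by move=> x q Hq Hl; have [p [_ _ -> Hm]] := Hpsi x; apply: Hm.
have Hpsi_ub : forall x, psi x <= 2 * dbar x.
  move=> x; have [Q [HQ HlQ HiQ]] := inc_walk x.
  apply: (le_trans (Hpsi_le x Q HQ HlQ)).
  apply: (le_trans (cw_le s Q Hw0le)).
  by rewrite cw_scale cw_wbar_inc // HlQ dbar_s subr0.
have Hpsi_inc : forall x, exists p, [/\ path E s p, last s p = x, psi x = cw w0 s p &
    forall e, e \in zip (s :: p) p -> (rk e.1 < rk e.2)%N].
  move=> x; have [p [Hp Hl Hc _]] := Hpsi x; exists p; split => // e He.
  apply/negPn/negP => Hne.
  have HeT : e \notin T.
    apply/negP => /HTinc [_ H]; rewrite -leqNgt in Hne.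
    by have := leq_trans H Hne; rewrite -{2}(addn0 (rk e.1)) leq_add2l.
  have := cw_le_term Hw0nn Hp He; rewrite -Hc Hw0out // /wbar (negbTE Hne).
  by have := Hpsi_ub x; have := Hbig_gt x; move=> *; lra.
pose D (l : R) x := (1 - l) * dbar x + l * psi x.
pose wl (l : R) := fun e => wbar e + (l * kappa) * y e.
have Hwl : forall l e, wl l e = (1 - l) * wbar e + l * w0 e.
  by move=> l e; rewrite /wl /w0; ring.
have Hdist : forall l, 0 <= l <= 1 -> forall x, dist E s (wl l) x = D l x.
  move=> l /andP[Hl0 Hl1] x; apply: dist_eq.
  have [p [Hp Hl Hc Hi]] := Hpsi_inc x.
  split.
    exists p; split => //; split => //.
    rewrite /walk_weight -/(cw _ _ _) (cw_ext _ _ (Hwl l)).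
    by rewrite cw_lin cw_wbar_inc // Hl dbar_s subr0 /D Hc.
  move=> q Hq Hlq; rewrite /walk_weight -/(cw _ _ _) (cw_ext _ _ (Hwl l)) cw_lin.
  apply: lerD; apply: ler_wpM2l; rewrite ?subr_ge0 //.
    exact: wbar_le_walk.
  exact: Hpsi_le.
have [HEuv Hr2] := HTinc _ He1.
have Hpar : odd (rk e1.2) = b by move: He1; rewrite inE => /and3P[_ _ /eqP].
have Hv0 : (0 < rk e1.2)%N by apply: leq_trans Hr2; rewrite addn2.
have [x Hx] := rk_onto (leq_ltn_trans (leq_pred _) (rk_bound e1.2)).
have Hrxv : (rk x < rk e1.2)%N by rewrite Hx prednK.
have Hrux : (rk e1.1 < rk x)%N.
  by rewrite Hx -ltnS prednK //; apply: leq_trans Hr2; rewrite addn2.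
have Hx0 : (0 < rk x)%N by apply: leq_ltn_trans Hrux.
have Hxs : x != s by apply/eqP => Hxs; move: Hx0; rewrite Hxs rk_s.
have Hvs : e1.2 != s by apply/eqP => Hvs; move: Hv0; rewrite Hvs rk_s.
have Hpsiv : psi e1.2 <= psi e1.1.
  have [pu [Hpu Hlu Hcu _]] := Hpsi e1.1.
  have := Hpsi_le e1.2 (rcons pu e1.2).
  rewrite rcons_path Hpu Hlu HEuv last_rcons cw_rcons -Hcu Hlu -surjective_pairing Hw0e1 addr0.
  by apply.
have Hoddx : (odd (rk x) == b) = false.
  by rewrite -Hpar -[rk e1.2](prednK Hv0) oddS Hx; case: (odd _).
have [p [Hpp Hrpx Hpsix]] : exists p, [/\ True, (rk p < rk x)%N & dbar x - dbar p <= psi x].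
  have [px [Hpx Hlx Hcx Hix]] := Hpsi_inc x.
  move: Hpx Hlx Hcx Hix; case/lastP: px => [|q x'].
    by move=> _ /= Hsx; rewrite Hsx eqxx in Hxs.
  rewrite last_rcons => Hpx Hx'; subst x'.
  move=> Hcx Hix.
  have Hin : (last s q, x) \in zip (s :: rcons q x) (rcons q x).
    by rewrite zip_rcons2 mem_rcons mem_head.
  have Hrp := Hix _ Hin.
  exists (last s q); split => //.
  have HnT : (last s q, x) \notin T by rewrite inE /= Hoddx !andbF.
  move: Hpx; rewrite rcons_path => /andP[Hq _].
  rewrite Hcx cw_rcons Hw0out // /wbar /= Hrp.
  by rewrite lerDr; apply: cw_ge0 Hw0nn Hq.
set m := (rk x).-1.
have HQ : (4 ^ rk x)%:R = 4 * (4 ^ m)%:R :> R by rewrite -natrM -expnS /m prednK.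
have Hp4 : (4 ^ rk p)%:R <= (4 ^ m)%:R :> R.
  by rewrite ler_nat leq_exp2l // /m -ltnS prednK.
have Hu4 : (4 ^ rk e1.1)%:R <= (4 ^ m)%:R :> R.
  by rewrite ler_nat leq_exp2l // /m -ltnS prednK.
have HQ0 : 0 < (4 ^ m)%:R :> R by rewrite ltr0n expn_gt0.
have Hpu2 := Hpsi_ub e1.1.
have Hpsi_lt : psi e1.2 < psi x.
  move: Hpsix Hpu2; rewrite /dbar HQ => h1 h2; lra.
have Hdxv : dbar x < dbar e1.2 by apply: dbar_lt.
set alpha := dbar e1.2 - dbar x.
set beta := (psi e1.2 - dbar e1.2) - (psi x - dbar x).
have Hal : 0 < alpha by rewrite /alpha subr_gt0.
have Hab : alpha < - beta by rewrite /alpha /beta; lra.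
have Hnb : 0 < - beta by lra.
set lam0 := alpha / (- beta).
have Hl00 : 0 < lam0 by rewrite divr_gt0.
have Hl01 : lam0 < 1 by rewrite /lam0 ltr_pdivrMr // mul1r.
set N := #|{: V * V}|.
pose frac (i : 'I_N.+1) : R := (i.+1)%:R / (N.+2)%:R.
have Hfr : forall i, 0 < frac i < 1.
  move=> i; rewrite /frac divr_gt0 ?ltr0n //= ltr_pdivrMr ?ltr0n // mul1r ltr_nat.
  by rewrite ltnS.
pose lam i := lam0 + (1 - lam0) * frac i.
have Hlam : forall i, lam0 < lam i /\ lam i < 1.
  move=> i; have /andP[h1 h2] := Hfr i; rewrite /lam; split; nra.
have Hlam_inj : injective lam.
  move=> i j /addrI /mulfI H.
  have /H {H} : 1 - lam0 != 0 by rewrite subr_eq0 gt_eqF.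
  rewrite /frac => /mulIf H.
  have /H {H} : (N.+2)%:R^-1 != 0 :> R by rewrite invr_eq0 pnatr_eq0.
  by move/eqP; rewrite eqr_nat eqSS => /eqP /val_inj.
have Hkey : forall i j a c, a != c -> D (lam i) a = D (lam i) c ->
    D (lam j) a = D (lam j) c -> i = j.
  move=> i j a c Hac; rewrite /D => Hi Hj.
  have : (lam i - lam j) * ((psi a - psi c) - (dbar a - dbar c)) = 0 by lra.
  move/eqP; rewrite mulf_eq0 subr_eq0 => /orP[/eqP /Hlam_inj //|/eqP Hd].
  have Hd0 : dbar a - dbar c = 0.
    have : lam i * (psi a - psi c - (dbar a - dbar c)) = 0 by rewrite Hd mulr0.
    by move=> h; lra.
  by move/eqP: Hd0; rewrite subr_eq0 => /eqP /dbar_inj Hac'; rewrite Hac' eqxx in Hac.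
have [i Hi] : exists i, forall a c, a != c -> D (lam i) a != D (lam i) c.
  have : [exists i : 'I_N.+1, [forall q : V * V, (q.1 != q.2) ==> (D (lam i) q.1 != D (lam i) q.2)]].
    apply: contraT; rewrite negb_exists => /forallP Hall.
    pose f (i : 'I_N.+1) := odflt (s, s) [pick q | (q.1 != q.2) && (D (lam i) q.1 == D (lam i) q.2)].
    have Hf : forall i, ((f i).1 != (f i).2) && (D (lam i) (f i).1 == D (lam i) (f i).2).
      move=> i; rewrite /f; case: pickP => [q Hq //|H0].
      move: (Hall i); rewrite negb_forall => /existsP [q]; rewrite negb_imply negbK => Hq.
      by rewrite H0 in Hq.
    have finj : injective f.
      move=> i j Hij; have := Hf i; have := Hf j; rewrite Hij.
      move=> /andP[Hne /eqP Hj] /andP[_ /eqP Hi].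
      exact: Hkey Hne Hi Hj.
    by have := leq_card f finj; rewrite card_ord /N ltnn.
  case/existsP => i /forallP H; exists i => a c Hac.
  by have := H (a, c); rewrite Hac.
have [Hli0 Hli1] := Hlam i.
have Hli : 0 <= lam i <= 1 by apply/andP; split; lra.
exists (lam i * kappa), x, e1.2; split.
- move=> a c _; have := Hwl (lam i) (a, c); rewrite /wl => ->.
  have := wbar_gt0 (a, c); have := Hw0ge (a, c); move=> h1 h2; nra.
- move=> a c; rewrite -/(wl _) !Hdist // => H; apply/eqP; apply: contraT => Hac.
  by have := Hi _ _ Hac; rewrite H eqxx.
- by rewrite Hxs Hvs.
- exact: Hdxv.
- rewrite -/(wl _) !Hdist //.
  have : alpha < lam i * (- beta).
    by rewrite -ltr_pdivrMr //; apply: lt_trans Hli0.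
  by rewrite /D /alpha /beta => h; lra.
Qed.

End Main.

Theorem theorem16 :
  forall R : realType, exists c : R, 0 < c /\
  forall (V : finType) (E : rel V) (s : V) (w : V * V -> R),
    all_reachable E s ->
    positive_weights E w ->
    distinct_distances E s w ->
    forall t : ldt R V, solves_distance_ordering E s t ->
    exists wbar : V * V -> R,
      positive_weights E wbar /\ distinct_distances E s wbar /\
      c * (m_f E s w)%:R <= (ldt_comparisons E t wbar)%:R.
Proof.
move=> R; exists (2^-1); split; first by rewrite invr_gt0 ltr0n.
move=> V E s w reach pos inj t solves.
set wb := wbar E s w.
have Hpos : positive_weights E wb by move=> a b _; apply: wbar_gt0.
have Hdis : distinct_distances E s wb.
  by move=> a c; rewrite !(dist_wbar reach pos inj) => /(dbar_inj inj).
exists wb; split => //; split => //.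
have HT : forall b, (#|Tpar E s w b| <= ldt_comparisons E t wb)%N.
  move=> b; rewrite -size_pathforms leqNgt; apply/negP => Hlt.
  have HTe : forall e, e \in Tpar E s w b -> E e.1 e.2.
    by move=> e; rewrite inE => /and3P[].
  have [y [Hy0 Hyne Hker]] := kernel_vec HTe Hlt.
  have [c [x [v [Hpos' Hdist' /andP[Hxs Hvs] Hdxv Hmis]]]] := core reach pos inj Hy0 Hyne.
  have Hout : ldt_output E t (fun e => wb e + c * y e) = ldt_output E t wb.
    apply: ldt_output_ker => a Ha.
    rewrite /lin_form; under eq_bigr => e _ do rewrite mulrCA.
    by rewrite -mulr_sumr -/(lin_form E a y) Hker // mulr0.
  have [Hperm1 Hsort1] := solves wb Hpos Hdis.
  have [Hperm2 Hsort2] := solves _ Hpos' Hdist'.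
  rewrite Hout in Hperm2 Hsort2.
  set O := ldt_output E t wb in Hperm1 Hsort1 Hperm2 Hsort2.
  have HxO : x \in O by rewrite (perm_mem Hperm1) mem_enum !inE.
  have HvO : v \in O by rewrite (perm_mem Hperm1) mem_enum !inE.
  have Hxv : x != v by apply: contraTneq Hdxv => ->; rewrite ltxx.
  have Hi : index x O \in [pred n | (n < size O)%N] by rewrite inE index_mem.
  have Hj : index v O \in [pred n | (n < size O)%N] by rewrite inE index_mem.
  have tr : forall f : V -> R, transitive (fun a b => f a < f b).
    by move=> f a0 b0 c0; apply: lt_trans.
  case: (ltngtP (index x O) (index v O)) => Hij.
  - have := sorted_ltn_nth (tr _) x Hsort2 _ _ Hi Hj Hij.
    rewrite !nth_index // => H; have := lt_trans H Hmis; by rewrite ltxx.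
  - have := sorted_ltn_nth (tr _) x Hsort1 _ _ Hj Hi Hij.
    rewrite !nth_index // !(dist_wbar reach pos inj) => H.
    by have := lt_trans H Hdxv; rewrite ltxx.
  - by move: Hij => /(congr1 (nth x O)); rewrite !nth_index // => Hxv'; rewrite Hxv' eqxx in Hxv.
have Hm : (m_f E s w <= 2 * ldt_comparisons E t wb)%N.
  apply: leq_trans (mf_bound reach pos inj) _.
  by rewrite mul2n -addnn leq_add.
have : (m_f E s w)%:R <= 2 * (ldt_comparisons E t wb)%:R :> R.
  by rewrite -natrM ler_nat.
move=> h; lra.
Qed.
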